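(* For real $m,n\ge 2$, let $p_c(m,n)$ denote the unique fixed point in $(0,1)$ of $f_{m,n}(p)=1-(1-p^n)^m$. Then for $m,n\ge 2$, $\frac{\partial p_c}{\partial m}<0$ and $\frac{\partial p_c}{\partial n}>0$.
   Context: The paper asserts that for $m,n\ge 2$ the function $f_{m,n}(p)=1-(1-p^n)^m$ has exactly one fixed point in $(0,1)$. This fixed point is repelling, while $0$ and $1$ are attracting fixed points. For integers $m,n$, this fixed point is the critical bond-percolation probability of the diamond fractal $D(m,n)$. $D(m,n)$ is obtained by starting from a single edge and repeatedly replacing every edge by $m$ parallel disjoint paths of $n$ edges each. *)

(* Defs.v *)
From Stdlib Require Import Reals ClassicalEpsilon.
From Coquelicot Require Import Coquelicot.
Open Scope R_scope.

Definition f_mn (m n p : R) : R := 1 - Rpower (1 - Rpower p n) m.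

Definition pc (m n : R) : R :=
  epsilon (inhabits 0) (fun p => 0 < p < 1 /\ f_mn m n p = p).

(* Main.v *)
Require Import Defs.
From Stdlib Require Import Reals Lra Psatz Ranalysis5 ClassicalEpsilon.
From Coquelicot Require Import Coquelicot.
Open Scope R_scope.
Lemma ln_neg x : 0 < x < 1 -> ln x < 0.
Proof. intros. rewrite <- ln_1. apply ln_increasing; lra. Qed.

Lemma ln_lt_xm1 x : 0 < x -> x <> 1 -> ln x < x - 1.
Proof.
intros H1 H2. assert (ln x <> 0).
{ intro E. apply H2. rewrite <- (exp_ln x H1), E. apply exp_0. }
pose proof (exp_ineq1 _ H). rewrite exp_ln in H0; lra.
Qed.

Lemma ln_le_xm1 x : 0 < x -> ln x <= x - 1.
Proof.
intros H1. destruct (Req_dec x 1) as [->|H2].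
- rewrite ln_1; lra.
- left; apply ln_lt_xm1; auto.
Qed.

Lemma concave_ln a b l : 0 < a -> 0 < b -> a <> b -> 0 < l < 1 ->
  l * ln a + (1 - l) * ln b < ln (l * a + (1 - l) * b).
Proof.
intros Ha Hb Hab Hl.
set (c := l * a + (1 - l) * b).
assert (Hc : 0 < c) by (unfold c; nra).
assert (Hac : a / c <> 1).
{ intro E. assert (a = c) by (apply (Rmult_eq_reg_r (/ c)); [|apply Rinv_neq_0_compat; lra];
   unfold Rdiv in E; rewrite E; field; lra).
  unfold c in H. assert ((1 - l) * (b - a) = 0) by lra.
  apply Rmult_integral in H0. lra. }
assert (H1 := ln_lt_xm1 (a / c) (Rdiv_lt_0_compat _ _ Ha Hc) Hac).
assert (H2 := ln_le_xm1 (b / c) (Rdiv_lt_0_compat _ _ Hb Hc)).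
rewrite ln_div in H1, H2; auto.
assert (Hs : l * (a / c - 1) + (1 - l) * (b / c - 1) = 0).
{ assert (Hceq : c = l * a + (1 - l) * b) by reflexivity.
  replace (l * (a / c - 1) + (1 - l) * (b / c - 1)) with ((l * a + (1 - l) * b) / c - 1) by (field; lra).
  rewrite <- Hceq. field; lra. }
nra.
Qed.

Lemma amgm u l : 0 < u -> u <> 1 -> 0 < l < 1 -> exp (l * ln u) < l * u + 1 - l.
Proof.
intros Hu Hu1 Hl.
pose proof (concave_ln u 1 l Hu Rlt_0_1 Hu1 Hl) as H.
rewrite ln_1, Rmult_0_r, Rplus_0_r, Rmult_1_r in H.
assert (0 < l * u + (1 - l)) by nra.
replace (l * u + 1 - l) with (l * u + (1 - l)) by ring.
rewrite <- (exp_ln _ H0). apply exp_increasing. exact H.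
Qed.

Lemma chord s t : 0 < s -> s < t -> t < 1 -> s * ln (1 - t) < t * ln (1 - s).
Proof.
intros Hs Hst Ht.
pose proof (concave_ln (1 - t) 1 (s / t) ltac:(lra) Rlt_0_1 ltac:(lra)) as H.
assert (0 < s / t < 1).
{ split. apply Rdiv_lt_0_compat; lra. apply (Rmult_lt_reg_r t); [lra|]. field_simplify; lra. }
specialize (H H0).
rewrite ln_1, Rmult_0_r, Rplus_0_r, Rmult_1_r in H.
replace (s / t * (1 - t) + (1 - s / t)) with (1 - s) in H by (field; lra).
apply (Rmult_lt_compat_l t) in H; [|lra].
replace (t * (s / t * ln (1 - t))) with (s * ln (1 - t)) in H by (field; lra). exact H.
Qed.
Lemma exp_neg_lt1 x : x < 0 -> exp x < 1.
Proof. intros. rewrite <- exp_0. apply exp_increasing. lra. Qed.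

Definition hh (N p : R) := ln (1 - p) / ln (1 - exp (N * ln p)).
Definition hd (N p : R) :=
  let E := exp (N * ln p) in
  ((- / (1 - p)) * ln (1 - E) - ln (1 - p) * (- (N * E / p) / (1 - E))) / (ln (1 - E))^2.

Lemma hh_der N p : 0 < p < 1 -> 0 < N -> is_derive (hh N) p (hd N p).
Proof.
intros Hp HN.
assert (HE : exp (N * ln p) < 1).
{ apply exp_neg_lt1. assert (ln p < 0) by (apply ln_neg; lra). nra. }
assert (HE0 := exp_pos (N * ln p)).
assert (HB : ln (1 - exp (N * ln p)) < 0) by (apply ln_neg; lra).
unfold hh, hd. auto_derive.
- unfold Rminus in *; repeat split; try lra.
- cbv zeta. unfold Rminus in *. field. unfold Rminus in *; repeat split; lra.
Qed.

Definition kk (M p : R) := ln (1 - exp (/ M * ln (1 - p))) / ln p.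
Definition kd (M p : R) :=
  let R := exp (/ M * ln (1 - p)) in
  ((/ M * R / ((1 - p) * (1 - R))) * ln p - ln (1 - R) * / p) / (ln p)^2.

Lemma kk_der M p : 0 < p < 1 -> 0 < M -> is_derive (kk M) p (kd M p).
Proof.
intros Hp HM.
assert (HR : exp (/ M * ln (1 - p)) < 1).
{ apply exp_neg_lt1. assert (ln (1-p) < 0) by (apply ln_neg; lra).
  assert (0 < / M) by (apply Rinv_0_lt_compat; lra). nra. }
assert (HR0 := exp_pos (/ M * ln (1 - p))).
assert (HD : ln p < 0) by (apply ln_neg; lra).
unfold kk, kd. auto_derive.
- unfold Rminus in *; repeat split; try lra.
- cbv zeta. unfold Rminus in *. field. repeat split; lra.
Qed.

Lemma hd_neg N p : 1 < N -> 0 < p < 1 -> hd N p < 0.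
Proof.
intros HN Hp. unfold hd; cbv zeta.
set (E := exp (N * ln p)).
assert (Hlp : ln p < 0) by (apply ln_neg; lra).
assert (HE0 : 0 < E) by apply exp_pos.
assert (HEp : E < p).
{ unfold E. rewrite <- (exp_ln p) at 2 by lra. apply exp_increasing. nra. }
assert (Hbern : 1 - E < N * (1 - p)).
{ assert (HE1 : E <> 1) by lra.
  assert (Hl : 0 < / N < 1).
  { split. apply Rinv_0_lt_compat; lra. rewrite <- Rinv_1. apply Rinv_lt_contravar; lra. }
  pose proof (amgm E (/ N) HE0 HE1 Hl) as H.
  replace (/ N * ln E) with (ln p) in H.
  2:{ unfold E. rewrite ln_exp. field. lra. }
  rewrite exp_ln in H by lra.
  apply (Rmult_lt_compat_l N) in H; [|lra].
  replace (N * (/ N * E + 1 - / N)) with (E + N - 1) in H by (field; lra). nra. }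
assert (Hch := chord E p HE0 HEp (proj2 Hp)).
set (A := ln (1 - p)) in *. set (B := ln (1 - E)) in *.
assert (HA : A < 0) by (apply ln_neg; lra).
assert (HB : B < 0) by (apply ln_neg; lra).
set (Num := - / (1 - p) * B - A * (- (N * E / p) / (1 - E))).
assert (Heq : Num * (p * (1 - p) * (1 - E)) = - p * (1 - E) * B + N * (1 - p) * E * A).
{ unfold Num. field. lra. }
assert (Hneg : - p * (1 - E) * B + N * (1 - p) * E * A < 0).
{ assert (X : E * A < 0) by nra.
  assert (- p * (1 - E) * B < - (1 - E) * (E * A)) by nra.
  assert (N * (1 - p) * (E * A) < (1 - E) * (E * A)) by nra.
  nra. }
assert (Hpos : 0 < p * (1 - p) * (1 - E)).
{ apply Rmult_lt_0_compat; [apply Rmult_lt_0_compat|]; lra. }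
assert (HN' : Num < 0) by nra.
unfold Rdiv. apply Rmult_neg_pos; [exact HN'|]. apply Rinv_0_lt_compat. nra.
Qed.

Lemma kd_pos M p : 1 < M -> 0 < p < 1 -> 0 < kd M p.
Proof.
intros HM Hp. unfold kd; cbv zeta.
set (a := / M).
assert (Ha : 0 < a < 1).
{ split. apply Rinv_0_lt_compat; lra. unfold a; rewrite <- Rinv_1. apply Rinv_lt_contravar; lra. }
set (R := exp (a * ln (1 - p))).
assert (Hlu : ln (1 - p) < 0) by (apply ln_neg; lra).
assert (HD : ln p < 0) by (apply ln_neg; lra).
assert (HuR : 1 - p < R).
{ unfold R. rewrite <- (exp_ln (1 - p)) at 1 by lra. apply exp_increasing. nra. }
assert (HR1 : R < 1) by (apply exp_neg_lt1; nra).
assert (Hch := chord (1 - p) R ltac:(lra) HuR HR1).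
replace (1 - (1 - p)) with p in Hch by ring.
assert (Hbern : a * p < 1 - R).
{ pose proof (amgm (1 - p) a ltac:(lra) ltac:(lra) Ha) as H. fold R in H. nra. }
set (Nk := ln (1 - R)) in *.
assert (HNk : Nk < 0) by (apply ln_neg; lra).
set (Num := a * R / ((1 - p) * (1 - R)) * ln p - Nk * / p).
assert (Heq : Num * (p * (1 - p) * (1 - R)) = a * R * p * ln p - (1 - p) * (1 - R) * Nk).
{ unfold Num. field. lra. }
assert (Hp2 : 0 < a * R * p * ln p - (1 - p) * (1 - R) * Nk).
{ assert (H1 : (1 - R) * ((1 - p) * Nk) < (a * p) * ((1 - p) * Nk)).
  { assert (0 < 1 - p) by lra. assert ((1 - p) * Nk < 0) by nra. nra. }
  assert (H2 : (a * p) * ((1 - p) * Nk) < (a * p) * (R * ln p)).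
  { apply Rmult_lt_compat_l; [nra | lra]. }
  nra. }
assert (Hpos : 0 < p * (1 - p) * (1 - R)).
{ apply Rmult_lt_0_compat; [apply Rmult_lt_0_compat|]; lra. }
assert (HN' : 0 < Num) by nra.
unfold Rdiv. apply Rmult_lt_0_compat; [exact HN'|]. apply Rinv_0_lt_compat. nra.
Qed.
Section Inv.
Variables (h g hd : R -> R) (x0 : R).
Hypothesis Hder : forall x, 0 < x < 1 -> is_derive h x (hd x).
Hypothesis Hinc : forall x y, 0 < x -> x < y -> y < 1 -> h x < h y.
Hypothesis Hg : forall x y, 0 < x < 1 -> h x = y -> g y = x.
Hypothesis Hx0 : 0 < x0 < 1.

Let a := x0 / 2.
Let b := (1 + x0) / 2.

Lemma hcont x : 0 < x < 1 -> continuity_pt h x.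
Proof.
intros Hx. apply derivable_continuous_pt.
exists (hd x). apply is_derive_Reals. apply Hder; auto.
Qed.

Lemma loc_exist y : h a < y < h b -> exists x, a < x < b /\ h x = y.
Proof.
intros Hy.
assert (Hab : a < b) by (unfold a, b; lra).
destruct (IVT_interv (fun x => h x - y) a b) as [z [Hz1 Hz2]].
- intros t Ht. apply continuity_pt_minus. apply hcont. unfold a, b in *; lra.
  apply continuity_pt_const. intros u v; reflexivity.
- exact Hab.
- lra.
- lra.
- exists z. assert (h z = y) by lra. split; [|auto].
  destruct Hz1 as [Hz1 Hz1']. split.
  + destruct Hz1 as [Hz1|Hz1]; auto. subst z. lra.
  + destruct Hz1' as [Hz1'|Hz1']; auto. subst z. lra.
Qed.

Lemma hle x y : 0 < x -> x <= y -> y < 1 -> h x <= h y.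
Proof. intros H1 [H2|H2] H3. left; apply Hinc; auto. subst; lra. Qed.

Lemma gcont eps : 0 < eps -> exists del, 0 < del /\ forall y, Rabs (y - h x0) < del ->
  0 < g y < 1 /\ h (g y) = y /\ Rabs (g y - x0) < eps.
Proof.
intros He.
set (e := Rmin eps (Rmin (x0 / 4) ((1 - x0) / 4))).
assert (He1 : e <= eps) by apply Rmin_l.
assert (He2 : e <= x0 / 4) by (eapply Rle_trans; [apply Rmin_r | apply Rmin_l]).
assert (He3 : e <= (1 - x0) / 4) by (eapply Rle_trans; [apply Rmin_r | apply Rmin_r]).
assert (He0 : 0 < e).
{ unfold e. repeat apply Rmin_glb_lt; lra. }
assert (Hlo : h (x0 - e) < h x0) by (apply Hinc; lra).
assert (Hhi : h x0 < h (x0 + e)) by (apply Hinc; lra).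
exists (Rmin (h x0 - h (x0 - e)) (h (x0 + e) - h x0)). split.
{ apply Rmin_glb_lt; lra. }
intros y Hy.
assert (Hy1 : Rabs (y - h x0) < h x0 - h (x0 - e)) by (eapply Rlt_le_trans; [exact Hy| apply Rmin_l]).
assert (Hy2 : Rabs (y - h x0) < h (x0 + e) - h x0) by (eapply Rlt_le_trans; [exact Hy| apply Rmin_r]).
apply Rabs_def2 in Hy1. apply Rabs_def2 in Hy2.
assert (Ha : h a <= h (x0 - e)) by (apply hle; unfold a; lra).
assert (Hb : h (x0 + e) <= h b) by (apply hle; unfold b; lra).
destruct (loc_exist y) as [x [Hx Hxy]]; [lra|].
assert (Hgx : g y = x) by (apply Hg; [unfold a, b in *; lra | auto]).
rewrite Hgx. split; [unfold a, b in *; lra|]. split; [auto|].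
apply Rabs_def1.
- destruct (Rlt_or_le (x - x0) e) as [H|H]; [lra|].
  assert (h (x0 + e) <= h x) by (apply hle; unfold a, b in *; lra). lra.
- destruct (Rlt_or_le (- e) (x - x0)) as [H|H]; [lra|].
  assert (h x <= h (x0 - e)) by (apply hle; unfold a, b in *; lra). lra.
Qed.

Lemma inv_incr : hd x0 <> 0 -> is_derive g (h x0) (/ hd x0).
Proof.
intros Hd0. apply is_derive_Reals.
set (d := hd x0) in *.
assert (Hdl : derivable_pt_lim h x0 d) by (apply is_derive_Reals; apply Hder; auto).
assert (Hgx0 : g (h x0) = x0) by (apply Hg; auto).
intros eps Heps.
assert (Had : 0 < Rabs d) by (apply Rabs_pos_lt; auto).
set (e1 := Rmin (Rabs d / 2) (eps * (Rabs d * Rabs d) / 2)).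
assert (He1 : 0 < e1).
{ unfold e1. apply Rmin_glb_lt. lra. apply Rmult_lt_0_compat; [|lra]. apply Rmult_lt_0_compat; nra. }
destruct (Hdl e1 He1) as [[d1 Hd1pos] Hd1].
destruct (gcont d1 Hd1pos) as [del [Hdel Hdel']].
exists (mkposreal del Hdel). intros t Ht0 Ht. simpl in Ht.
assert (Hyt : Rabs (h x0 + t - h x0) < del) by (replace (h x0 + t - h x0) with t by ring; auto).
destruct (Hdel' _ Hyt) as [Hg1 [Hg2 Hg3]].
set (k := g (h x0 + t) - x0) in *.
assert (Hk0 : k <> 0).
{ intro Hk. unfold k in Hk. assert (g (h x0 + t) = x0) by lra. rewrite H in Hg2. lra. }
specialize (Hd1 k Hk0 Hg3).
replace (x0 + k) with (g (h x0 + t)) in Hd1 by (unfold k; ring).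
rewrite Hg2 in Hd1.
replace (h x0 + t - h x0) with t in Hd1 by ring.
rewrite Hgx0. fold k.
set (q := t / k) in *.
assert (Hq0 : q <> 0) by (unfold q, Rdiv; apply Rmult_integral_contrapositive_currified; [auto | apply Rinv_neq_0_compat; auto]).
replace (k / t) with (/ q) by (unfold q; field; auto).
assert (Hqd : Rabs (q - d) < Rabs d / 2) by (eapply Rlt_le_trans; [exact Hd1| apply Rmin_l]).
assert (Hqd2 : Rabs (q - d) <= eps * (Rabs d * Rabs d) / 2) by (left; eapply Rlt_le_trans; [exact Hd1| apply Rmin_r]).
assert (Hq : Rabs d / 2 < Rabs q).
{ pose proof (Rabs_triang_inv d (d - q)). replace (d - (d - q)) with q in H by ring.
  rewrite Rabs_minus_sym in Hqd. lra. }
replace (/ q - / d) with ((d - q) / (q * d)) by (field; auto).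
unfold Rdiv. rewrite Rabs_mult, Rabs_inv, Rabs_mult, Rabs_minus_sym.
assert (Hqdpos : 0 < Rabs q * Rabs d) by nra.
apply (Rmult_lt_reg_r (Rabs q * Rabs d)); auto.
rewrite Rmult_assoc, Rinv_l by lra. rewrite Rmult_1_r.
apply (Rle_lt_trans _ (eps * (Rabs d * Rabs d) / 2)); auto.
assert (eps * (Rabs d * Rabs d) / 2 = eps * (Rabs d / 2 * Rabs d)) by field.
rewrite H. apply Rmult_lt_compat_l; [auto|]. apply Rmult_lt_compat_r; [auto|lra].
Qed.

End Inv.

Lemma ln_nz_pos x : ln x <> 0 -> 0 < x.
Proof. unfold ln. destruct (Rlt_dec 0 x); auto. intros H; exfalso; auto. Qed.

Lemma rel_fix M N p : 0 < p < 1 ->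
  (f_mn M N p = p <-> M * ln (1 - exp (N * ln p)) = ln (1 - p)).
Proof.
intros Hp. unfold f_mn, Rpower. split.
- intros H. assert (H' : exp (M * ln (1 - exp (N * ln p))) = 1 - p) by lra.
  apply (f_equal ln) in H'. rewrite ln_exp in H'. exact H'.
- intros H. rewrite H, exp_ln by lra. ring.
Qed.

Lemma rel_hh M N p : 0 < p < 1 -> 0 < N ->
  (M * ln (1 - exp (N * ln p)) = ln (1 - p) <-> hh N p = M).
Proof.
intros Hp HN.
assert (HE : exp (N * ln p) < 1).
{ apply exp_neg_lt1. assert (ln p < 0) by (apply ln_neg; lra). nra. }
assert (HE0 := exp_pos (N * ln p)).
assert (HB : ln (1 - exp (N * ln p)) < 0) by (apply ln_neg; lra).
unfold hh. split.
- intros H. rewrite <- H. field. lra.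
- intros H. rewrite <- H. field. lra.
Qed.

Lemma rel_kk M N p : 0 < p < 1 -> 0 < M ->
  (M * ln (1 - exp (N * ln p)) = ln (1 - p) <-> kk M p = N).
Proof.
intros Hp HM.
assert (HA : ln (1 - p) < 0) by (apply ln_neg; lra).
assert (HD : ln p < 0) by (apply ln_neg; lra).
assert (HiM : 0 < / M) by (apply Rinv_0_lt_compat; lra).
assert (HR : exp (/ M * ln (1 - p)) < 1) by (apply exp_neg_lt1; nra).
unfold kk. split.
- intros H.
  assert (HB : ln (1 - exp (N * ln p)) = / M * ln (1 - p)) by (rewrite <- H; field; lra).
  assert (HB0 : 0 < 1 - exp (N * ln p)) by (apply ln_nz_pos; rewrite HB; nra).
  rewrite <- HB, exp_ln by auto.
  replace (1 - (1 - exp (N * ln p))) with (exp (N * ln p)) by ring.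
  rewrite ln_exp. field. lra.
- intros H.
  assert (H1 : ln (1 - exp (/ M * ln (1 - p))) = N * ln p) by (rewrite <- H; field; lra).
  apply (f_equal exp) in H1. rewrite exp_ln in H1 by lra.
  replace (1 - exp (N * ln p)) with (exp (/ M * ln (1 - p))) by lra.
  rewrite ln_exp. field. lra.
Qed.

Lemma E_lt N p : 1 < N -> 0 < p < 1 -> exp (N * ln p) < p.
Proof.
intros HN Hp. assert (Hlp : ln p < 0) by (apply ln_neg; lra).
rewrite <- (exp_ln p) at 2 by lra. apply exp_increasing. nra.
Qed.

Lemma bern N p : 1 < N -> 0 < p < 1 -> 1 - exp (N * ln p) < N * (1 - p).
Proof.
intros HN Hp.
set (E := exp (N * ln p)).
assert (HE0 : 0 < E) by apply exp_pos.
assert (HEp : E < p) by (apply E_lt; auto).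
assert (HE1 : E <> 1) by lra.
assert (Hl : 0 < / N < 1).
{ split. apply Rinv_0_lt_compat; lra. rewrite <- Rinv_1. apply Rinv_lt_contravar; lra. }
pose proof (amgm E (/ N) HE0 HE1 Hl) as H.
replace (/ N * ln E) with (ln p) in H.
2:{ unfold E. rewrite ln_exp. field. lra. }
rewrite exp_ln in H by lra.
apply (Rmult_lt_compat_l N) in H; [|lra].
replace (N * (/ N * E + 1 - / N)) with (E + N - 1) in H by (field; lra). nra.
Qed.

Lemma hh_decr N x y : 1 < N -> 0 < x -> x < y -> y < 1 -> hh N y < hh N x.
Proof.
intros HN Hx Hxy Hy.
cut (- hh N x < - hh N y). lra.
apply (incr_function (fun p => - hh N p) (Finite 0) (Finite 1) (fun p => - hd N p)); simpl; auto; try lra.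
- intros t H1 H2. exact (is_derive_opp (hh N) t (hd N t) (hh_der N t ltac:(lra) ltac:(lra))).
- intros t H1 H2. pose proof (hd_neg N t HN (conj H1 H2)). lra.
Qed.

Lemma kk_incr M x y : 1 < M -> 0 < x -> x < y -> y < 1 -> kk M x < kk M y.
Proof.
intros HM Hx Hxy Hy.
apply (incr_function (kk M) (Finite 0) (Finite 1) (kd M)); simpl; auto; try lra.
- intros t H1 H2. apply kk_der; lra.
- intros t H1 H2. apply kd_pos; auto.
Qed.

Definition Pfix M N p := 0 < p < 1 /\ f_mn M N p = p.

Lemma pc_spec M N x : Pfix M N x -> Pfix M N (pc M N).
Proof. intros H. unfold pc. apply epsilon_spec. exists x; exact H. Qed.

Lemma pc_char_h N M x : 1 < N -> 0 < x < 1 -> hh N x = M -> pc M N = x.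
Proof.
intros HN Hx H.
assert (Px : Pfix M N x).
{ split; auto. apply rel_fix; auto. apply rel_hh; auto; lra. }
destruct (pc_spec _ _ _ Px) as [Hq Hf].
apply rel_fix in Hf; auto. apply rel_hh in Hf; [|auto|lra].
destruct (Rtotal_order (pc M N) x) as [Hl|[He|Hl]]; auto.
- pose proof (hh_decr N _ _ HN (proj1 Hq) Hl (proj2 Hx)). lra.
- pose proof (hh_decr N _ _ HN (proj1 Hx) Hl (proj2 Hq)). lra.
Qed.

Lemma pc_char_k M N x : 1 < M -> 0 < x < 1 -> kk M x = N -> pc M N = x.
Proof.
intros HM Hx H.
assert (Px : Pfix M N x).
{ split; auto. apply rel_fix; auto. apply rel_kk; auto; lra. }
destruct (pc_spec _ _ _ Px) as [Hq Hf].
apply rel_fix in Hf; auto. apply rel_kk in Hf; [|auto|lra].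
destruct (Rtotal_order (pc M N) x) as [Hl|[He|Hl]]; auto.
- pose proof (kk_incr M _ _ HM (proj1 Hq) Hl (proj2 Hx)). lra.
- pose proof (kk_incr M _ _ HM (proj1 Hx) Hl (proj2 Hq)). lra.
Qed.

Lemma exist_base m n : 2 <= m -> 2 <= n -> exists p, 0 < p < 1 /\ hh n p = m.
Proof.
intros Hm Hn.
set (a := / (4 * m)).
assert (Ha : 0 < a <= / 8).
{ unfold a. split. apply Rinv_0_lt_compat; lra. apply Rinv_le_contravar; lra. }
set (b := 1 - / (n * n)).
assert (Hb0 : 0 < / (n * n) <= / 4).
{ split. apply Rinv_0_lt_compat; nra. apply Rinv_le_contravar; nra. }
assert (Hb : 3 / 4 <= b < 1) by (unfold b; lra).
assert (Hha : m < hh n a).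
{ set (E := exp (n * ln a)).
  assert (HE0 : 0 < E) by apply exp_pos.
  assert (HEa : E <= a * a).
  { unfold E. rewrite <- (exp_ln a) at 2 by lra. rewrite <- (exp_ln a) at 3 by lra.
    rewrite <- exp_plus. assert (ln a < 0) by (apply ln_neg; lra).
    destruct (Req_dec (n * ln a) (ln a + ln a)) as [->|]; [lra|].
    left. apply exp_increasing. nra. }
  assert (HA : ln (1 - a) <= - a) by (pose proof (ln_le_xm1 (1 - a)); lra).
  assert (HE1 : E < 1) by nra.
  assert (HB : - (E / (1 - E)) <= ln (1 - E)).
  { pose proof (ln_le_xm1 (/ (1 - E)) ltac:(apply Rinv_0_lt_compat; lra)).
    rewrite ln_Rinv in H by lra.
    replace (/ (1 - E) - 1) with (E / (1 - E)) in H by (field; lra). lra. }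
  assert (HBn : ln (1 - E) < 0) by (apply ln_neg; lra).
  assert (Hma : m * a = / 4) by (unfold a; field; lra).
  assert (Hkey : m * E < a * (1 - E)) by nra.
  assert (Hkey2 : - a < - (m * (E / (1 - E)))).
  { apply Ropp_lt_contravar. apply (Rmult_lt_reg_r (1 - E)); [lra|].
    replace (m * (E / (1 - E)) * (1 - E)) with (m * E) by (field; lra). lra. }
  assert (ln (1 - a) < m * ln (1 - E)) by nra.
  unfold hh. fold E.
  apply (Rmult_lt_reg_r (- ln (1 - E))); [lra|].
  replace (ln (1 - a) / ln (1 - E) * - ln (1 - E)) with (- ln (1 - a)) by (field; lra). lra. }
assert (Hhb : hh n b < m).
{ set (E := exp (n * ln b)).
  assert (HE0 : 0 < E) by apply exp_pos.
  assert (HE1 : E < 1) by (pose proof (E_lt n b ltac:(lra) ltac:(lra)); unfold E; lra).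
  assert (Hbe : 1 - E < n * (1 - b)) by (apply bern; lra).
  assert (Hnb : n * n * (1 - b) = 1) by (unfold b; field; lra).
  assert (Hsq : (1 - E) * (1 - E) < 1 - b).
  { assert ((1 - E) * (1 - E) < (n * (1 - b)) * (n * (1 - b))) by (apply Rmult_le_0_lt_compat; lra).
    nra. }
  assert (H2 : 2 * ln (1 - E) < ln (1 - b)).
  { replace (2 * ln (1 - E)) with (ln ((1 - E) * (1 - E))) by (rewrite ln_mult; lra).
    apply ln_increasing; nra. }
  assert (HBn : ln (1 - E) < 0) by (apply ln_neg; lra).
  assert (m * ln (1 - E) < ln (1 - b)) by nra.
  unfold hh. fold E.
  apply (Rmult_lt_reg_r (- ln (1 - E))); [lra|].
  replace (ln (1 - b) / ln (1 - E) * - ln (1 - E)) with (- ln (1 - b)) by (field; lra). lra. }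
destruct (IVT_interv (fun x => m - hh n x) a b) as [z [Hz1 Hz2]].
- intros t Ht. apply continuity_pt_minus. apply continuity_pt_const. intros u v; reflexivity.
  apply derivable_continuous_pt. exists (hd n t). apply is_derive_Reals. apply hh_der; lra.
- lra.
- lra.
- lra.
- exists z. split; [lra|lra].
Qed.

Theorem proposition3p4 (m n : R) (hm : 2 <= m) (hn : 2 <= n) :
  (exists d, is_derive (fun x => pc x n) m d /\ d < 0) /\
  (exists d, is_derive (fun y => pc m y) n d /\ 0 < d).
Proof.
destruct (exist_base m n hm hn) as [p0 [Hp0 Hh0]].
split.
- exists (/ hd n p0). split.
  2:{ apply Rinv_lt_0_compat. apply hd_neg; lra. }
  assert (Hd : is_derive (fun y => pc (- y) n) (- hh n p0) (/ - hd n p0)).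
  { apply (inv_incr (fun x => - hh n x) (fun y => pc (- y) n) (fun x => - hd n x) p0).
    - intros x Hx. exact (is_derive_opp (hh n) x (hd n x) (hh_der n x Hx ltac:(lra))).
    - intros x y H1 H2 H3. pose proof (hh_decr n x y ltac:(lra) H1 H2 H3). lra.
    - intros x y Hx Hxy. apply pc_char_h; auto; lra.
    - auto.
    - pose proof (hd_neg n p0 ltac:(lra) Hp0). lra. }
  rewrite Hh0 in Hd.
  pose proof (is_derive_comp (fun y => pc (- y) n) (fun x => - x) m (/ - hd n p0) (-1) Hd) as Hc.
  assert (Hid : is_derive (fun x : R => - x) m (-1)).
  { auto_derive; auto; ring. }
  specialize (Hc Hid).
  assert (Hhd : hd n p0 <> 0) by (pose proof (hd_neg n p0 ltac:(lra) Hp0); lra).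
  replace (/ hd n p0) with (scal (-1) (/ - hd n p0)).
  2:{ change (Rmult (-1) (/ - hd n p0) = / hd n p0). field. auto. }
  apply (is_derive_ext (fun x => pc (- - x) n)); [|exact Hc].
  intros t. simpl. rewrite Ropp_involutive. reflexivity.
- exists (/ kd m p0). split.
  2:{ apply Rinv_0_lt_compat. apply kd_pos; lra. }
  assert (Hk : kk m p0 = n).
  { apply rel_kk; [auto|lra|]. apply rel_hh; [auto|lra|auto]. }
  rewrite <- Hk at 1.
  apply (inv_incr (kk m) (fun y => pc m y) (kd m) p0).
  + intros x Hx. apply kk_der; lra.
  + intros x y H1 H2 H3. apply kk_incr; auto; lra.
  + intros x y Hx Hxy. apply pc_char_k; auto; lra.
  + auto.
  + pose proof (kd_pos m p0 ltac:(lra) Hp0). lra.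
Qed.
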